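(* For the model $(\mathcal N,f,r)$ with $f$ the algebraic sum over $\mathbb F_q$, $$\widehat{\mathcal C}(\mathcal N,f,r)\le\min_{W\in\mathcal W'_r}|C^*_W|,$$ and this right-hand side equals $\min\{|C|-|W|:(W,C)\in\mathcal W_r\times\Lambda(\mathcal N),\ W\subseteq C,\ D_W\subseteq I_C\}$, where $\mathcal W'_r=\{W\in\mathcal W_r:W=\widehat W\}$ and $C^*_W$ is the primary minimum cut separating $\rho$ from $D_W$ in the residual graph $\mathcal G_W$.
   Context: Network model: $\mathcal G=(\mathcal V,\mathcal E)$ is a finite directed acyclic graph (multiple edges allowed); $\mathcal E_{\rm in}(u)$ are the input edges of node $u$. $S=\{\sigma_1,\dots,\sigma_s\}$ is the set of source nodes (exactly the nodes without input edges), $\rho\notin S$ the sink (no output edges), every node other than $\rho$ has a directed path to $\rho$; $\mathcal N=(\mathcal G,S,\rho)$. For a node $\sigma$ and edge $e$, $\sigma\to e$ means there is a directed path from $\sigma$ whose last edge is $e$. For $C\subseteq\mathcal E$: $D_C=\{\sigma\in S:\exists e\in C,\ \sigma\to e\}$, $I_C=\{\sigma\in S:$ no path from $\sigma$ to $\rho$ after deleting $C\}$; $\Lambda(\mathcal N)=\{C\subseteq\mathcal E:I_C\neq\emptyset\}$. $\mathcal W_r=\{W\subseteq\mathcal E:|W|\le r\}$. $\mathcal G_W$ is $\mathcal G$ with the edges of $W$ deleted. Cuts: an edge set $C$ separates a node set (resp. edge set) $X$ from a node set $U$ if every path from a node of $U$ to a node (resp. edge) of $X$ uses an edge of $C$ (formally,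 for an edge set $X$ one subdivides each $e\in X$ by a new node $v_e$ into $e^1,e^2$ and identifies $e^1,e^2$ with $e$ in the cut). A minimum cut has minimum size; a minimum cut separating $X$ from $U$ is primary if it separates from $U$ every minimum cut separating $X$ from $U$ (it exists and is unique); for a node $\rho$ this means separating $\mathcal E_{\rm in}(\rho)$. $\widehat W$ is the primary minimum cut separating $W$ from $D_W$. Secure model: $q$ a prime power, $f(m_1,\dots,m_s)=\sum_i m_i$ over $\mathbb F_q$; each edge carries one symbol of $\mathbb F_q$ per use. An $(\ell,n)$ secure network code: source $\sigma_i$ holds $\mathbf M_i\in\mathbb F_q^\ell$ with i.i.d. uniform entries and a key $\mathbf K_i$ uniform on a finite set $\mathcal K_i$; all mutually independent. Each edge out of $\sigma_i$ carries a function of $(\mathbf M_i,\mathbf K_i)$ with values in $\mathbb F_q^n$; every other edge carries a function in $\mathbb F_q^n$ of the messages on the input edges of its tail; a decoder maps messages on $\mathcal E_{\rm in}(\rho)$ to $\mathbb F_q^\ell$. Admissible: decoder outputs $\sum_i\mathbf m_i$ for all messages and keys, and $I(\mathbf Y_W;\mathbf M_S)=0$ for all $W\in\mathcal W_r$ ($\mathbf Y_W$ the messages on $W$, $\mathbf M_S=(\mathbf M_1,\dots,\mathbf M_s)$). Rate $\ell/n$; $R$ achievable if for every $\epsilon>0$ some admissible code has rate $>R-\epsilon$; $\widehat{\mathcal C}(\mathcal N,f,r)$ is the maximum achievable rate. *)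

(* Defs.v *)
From HB Require Import structures.
From mathcomp Require Import all_boot all_order all_algebra.
From mathcomp Require Import reals exp.

Set Implicit Arguments.
Unset Strict Implicit.
Unset Printing Implicit Defensive.

Import Order.TTheory GRing.Theory Num.Theory.
Local Open Scope ring_scope.

Definition walk (V E : finType) (tl hd : E -> V) (u v : V) (p : seq E) : bool :=
  match p with
  | [::] => u == v
  | e :: p' => [&& tl e == u, path (fun a b => hd a == tl b) e p'
                 & hd (last e p') == v]
  end.

Definition acyclic (V E : finType) (tl hd : E -> V) : Prop :=
  forall (u : V) (p : seq E), p != [::] -> ~~ walk tl hd u u p.

Definition Ein (V E : finType) (hd : E -> V) (u : V) : {set E} :=
  [set e | hd e == u].

Definition srcs (V E : finType) (hd : E -> V) : {set V} :=
  [set v | Ein hd v == set0].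

Definition network (V E : finType) (tl hd : E -> V) (rho : V) : Prop :=
  [/\ acyclic tl hd,
      rho \notin srcs hd,
      (forall e, tl e != rho)
    & (forall v, v != rho -> exists p, walk tl hd v rho p)].

Definition reaches (V E : finType) (tl hd : E -> V) (s : V) (e : E) : Prop :=
  exists p : seq E, walk tl hd s (hd e) (rcons p e).


Definition Dset (V E : finType) (tl hd : E -> V) (C : {set E}) (s : V) : Prop :=
  s \in srcs hd /\ exists2 e, e \in C & reaches tl hd s e.

Definition Iset (V E : finType) (tl hd : E -> V) (rho : V) (C : {set E}) (s : V)
  : Prop :=
  s \in srcs hd /\
  ~ (exists p : seq E, walk tl hd s rho p /\ all (fun e => e \notin C) p).

Definition Lambda (V E : finType) (tl hd : E -> V) (rho : V) (C : {set E}) : Prop :=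
  exists s, Iset tl hd rho C s.

(* Cuts, in the graph whose edge set is [A] (A = [set: E] for G itself,
   A = ~: W for the residual graph G_W).
   [sep tl hd A C X U]: the edge set C separates the edge set X from the node
   set U, i.e. every path (in the graph with edges A) from a node of U whose
   last edge belongs to X uses an edge of C (the last edge e in X itself
   counting, as in the subdivision convention e^1 ~ e). *)
Definition sep (V E : finType) (tl hd : E -> V) (A C X : {set E}) (U : V -> Prop)
  : Prop :=
  forall (u : V) (p : seq E) (e : E), U u -> e \in X ->
    walk tl hd u (hd e) (rcons p e) -> all (fun a => a \in A) (rcons p e) ->
    has (fun a => a \in C) (rcons p e).

Definition mincut (V E : finType) (tl hd : E -> V) (A X : {set E}) (U : V -> Prop)
  (C : {set E}) : Prop :=
  [/\ C \subset A, sep tl hd A C X U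
    & forall C' : {set E}, C' \subset A -> sep tl hd A C' X U -> #|C| <= #|C'|]%N.

Definition primary (V E : finType) (tl hd : E -> V) (A X : {set E}) (U : V -> Prop)
  (C : {set E}) : Prop :=
  mincut tl hd A X U C /\
  forall C' : {set E}, mincut tl hd A X U C' -> sep tl hd A C C' U.

Definition is_hat (V E : finType) (tl hd : E -> V) (W : {set E}) : Prop :=
  primary tl hd [set: E] W (Dset tl hd W) W.

Definition Wr' (V E : finType) (tl hd : E -> V) (r : nat) (W : {set E}) : Prop :=
  [/\ (#|W| <= r)%N, W != set0 & is_hat tl hd W].

(* C = C*_W : the primary minimum cut separating rho (i.e. E_in(rho)) from D_W
   in the residual graph G_W *)
Definition Cstar (V E : finType) (tl hd : E -> V) (rho : V) (W C : {set E}) : Prop :=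
  primary tl hd (~: W) (Ein hd rho) (Dset tl hd W) C.

Definition WCpair (V E : finType) (tl hd : E -> V) (rho : V) (r : nat)
  (W C : {set E}) : Prop :=
  [/\ (#|W| <= r)%N, W != set0, Lambda tl hd rho C, W \subset C
    & forall s, Dset tl hd W s -> Iset tl hd rho C s].

Definition srcT (V E : finType) (hd : E -> V) : finType :=
  {v : V | v \in srcs hd}.

(* An (l, n) network code:
   - key s : the finite set K_s of keys of source s (nonempty);
   - enc s m k e : message on an edge e out of source s, a function of (m,k);
   - loc e y : message on an edge e whose tail is not a source, a function of
     the messages y on the input edges of [tl e] (locality condition);
   - dec y : decoding function, a function of the messages on E_in(rho). *)
Record code (F : finFieldType) (V E : finType) (tl hd : E -> V) (rho : V)
    (l n : nat) := Code {
  key : srcT hd -> finType;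
  key_nonempty : forall s, (0 < #|key s|)%N;
  enc : forall s : srcT hd, 'rV[F]_l -> key s -> E -> 'rV[F]_n;
  loc : E -> (E -> 'rV[F]_n) -> 'rV[F]_n;
  dec : (E -> 'rV[F]_n) -> 'rV[F]_l;
  loc_local : forall e (y y' : E -> 'rV[F]_n),
      (forall e', hd e' == tl e -> y e' = y' e') -> loc e y = loc e y';
  dec_local : forall (y y' : E -> 'rV[F]_n),
      (forall e', hd e' == rho -> y e' = y' e') -> dec y = dec y'
}.

(* sample space: all messages M_S and all keys K_S, uniformly distributed
   (hence independent, with i.i.d. uniform message entries) *)
Definition msgT (F : finFieldType) (V E : finType) (hd : E -> V) (l : nat) :=
  {ffun srcT hd -> 'rV[F]_l}.
Definition keyT (F : finFieldType) (V E : finType) (tl hd : E -> V) (rho : V)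
  (l n : nat) (c : code F tl hd rho l n) :=
  {dffun forall s : srcT hd, key c s}.
Definition Omega (F : finFieldType) (V E : finType) (tl hd : E -> V) (rho : V)
  (l n : nat) (c : code F tl hd rho l n) :=
  (msgT F hd l * keyT c)%type.

Definition step (F : finFieldType) (V E : finType) (tl hd : E -> V) (rho : V)
  (l n : nat) (c : code F tl hd rho l n) (w : Omega c) (y : E -> 'rV[F]_n)
  : E -> 'rV[F]_n :=
  fun e => match insub (tl e) : option (srcT hd) with
           | Some s => @enc _ _ _ _ _ _ _ _ c s (w.1 s) (w.2 s) e
           | None => loc c e y
           end.

(* the messages on all edges for given messages/keys: on an acyclic graph
   iterating the local equations #|E| times computes them *)
Definition glob (F : finFieldType) (V E : finType) (tl hd : E -> V) (rho : V)
  (l n : nat) (c : code F tl hd rho l n) (w : Omega c) : E -> 'rV[F]_n :=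
  iter #|E| (step w) (fun _ => 0).

Definition YW (F : finFieldType) (V E : finType) (tl hd : E -> V) (rho : V)
  (l n : nat) (c : code F tl hd rho l n) (W : {set E}) (w : Omega c)
  : {ffun E -> 'rV[F]_n} :=
  [ffun e => if e \in W then glob w e else 0].

Definition prob (R : realType) (T : finType) (P : pred T) : R :=
  #|[set t | P t]|%:R / #|T|%:R.

Definition mutinf (R : realType) (T : finType) (A B : eqType)
  (X : T -> A) (Y : T -> B) : R :=
  \sum_(t : T) (#|T|%:R)^-1 *
     ln (prob R (fun u => (X u == X t) && (Y u == Y t)) /
         (prob R (fun u => X u == X t) * prob R (fun u => Y u == Y t))).

Definition admissible (R : realType) (F : finFieldType) (V E : finType)
  (tl hd : E -> V) (rho : V) (r l n : nat) (c : code F tl hd rho l n) : Prop :=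
  (forall w : Omega c, dec c (glob w) = \sum_(s : srcT hd) w.1 s) /\
  (forall W : {set E}, (#|W| <= r)%N ->
     mutinf R (YW W) (fun w : Omega c => w.1) = 0).

Definition achievable (R : realType) (F : finFieldType) (V E : finType)
  (tl hd : E -> V) (rho : V) (r : nat) (x : R) : Prop :=
  forall eps : R, 0 < eps ->
    exists (l n : nat) (c : code F tl hd rho l n),
      [/\ (0 < n)%N, admissible R r c & x - eps < l%:R / n%:R].

(* Main.v *)
Require Import Defs.
From HB Require Import structures.
From mathcomp Require Import all_boot all_order all_algebra.
From mathcomp Require Import reals exp.
From Stdlib Require Import ClassicalEpsilon Classical.
From mathcomp Require Import lra ring.
Import Order.TTheory GRing.Theory Num.Theory.

Set Implicit Arguments.
Unset Strict Implicit.
Unset Printing Implicit Defensive.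


Definition pb (P : Prop) : bool :=
  if excluded_middle_informative P then true else false.
Lemma pbP (P : Prop) : reflect P (pb P).
Proof. by rewrite /pb; case: excluded_middle_informative => H; constructor. Qed.

Lemma ex_min (P : nat -> Prop) : (exists n, P n) ->
  exists n, P n /\ forall m, P m -> n <= m.
Proof.
case=> n; elim/ltn_ind: n => n IH Pn.
case: (classic (exists m, P m /\ m < n)) => [[m [Pm lt]]|H]; first exact: IH lt Pm.
exists n; split=> // m Pm; rewrite leqNgt; apply/negP => lt; apply: H; eauto.
Qed.

Definition succ (V E : finType) (tl hd : E -> V) : rel E := fun a b => hd a == tl b.

Definition sepx (V E : finType) (tl hd : E -> V) (A C X : {set E}) (U : V -> Prop) : Prop :=
  forall x q, U (tl x) -> path (succ tl hd) x q -> last x q \in X ->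
    all (fun a => a \in A) (x :: q) -> has (fun a => a \in C) (x :: q).

Lemma rcons_ex (T : Type) (p : seq T) e : exists x q, rcons p e = x :: q.
Proof. by case: p => [|y p]; [exists e, [::] | exists y, (rcons p e)]. Qed.

Lemma walk_rc (V E : finType) (tl hd : E -> V) u v x q :
  walk tl hd u v (x :: q) = [&& tl x == u, path (succ tl hd) x q & hd (last x q) == v].
Proof. by []. Qed.

Lemma last_rc (T : Type) (p : seq T) e x q : rcons p e = x :: q -> last x q = e.
Proof. move=> Eq; have : last x (x :: q) = last x (rcons p e) by rewrite Eq.
by rewrite last_rcons. Qed.

Lemma sepE (V E : finType) (tl hd : E -> V) (A C X : {set E}) (U : V -> Prop) :
  sep tl hd A C X U <-> sepx tl hd A C X U.
Proof.
split.
- move=> H x q Ux pq lX aA.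
  have := H (tl x) (belast x q) (last x q) Ux lX; rewrite -lastI walk_rc eqxx pq eqxx.
  by apply.
- move=> H u p e Uu eX; case: (rcons_ex p e) => x [q Eq].
  rewrite Eq walk_rc => /and3P [/eqP tx pq _] aA.
  by apply: H; rewrite ?tx ?(last_rc Eq).
Qed.

Lemma reachesE (V E : finType) (tl hd : E -> V) s e :
  reaches tl hd s e <-> exists x q, [/\ tl x = s, path (succ tl hd) x q & last x q = e].
Proof.
split.
- case=> p; case: (rcons_ex p e) => x [q Eq].
  rewrite Eq walk_rc => /and3P [/eqP tx pq _]; exists x, q; split=> //.
  exact: last_rc Eq.
- case=> x [q [tx pq le]]; exists (belast x q); rewrite -le -lastI walk_rc tx pq !eqxx.
  done.
Qed.

Lemma has_split (T : Type) (P : pred T) x q : has P (x :: q) ->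
  exists q1 q2, q = q1 ++ q2 /\ P (last x q1).
Proof.
elim: q x => [|y q IH] x /=.
- by rewrite orbF => Px; exists [::], [::].
- case Px: (P x) => /=; first by move=> _; exists [::], (y :: q).
  case/IH => q1 [q2 [-> Pl]]; by exists (y :: q1), q2.
Qed.

Lemma sep_trans (V E : finType) (tl hd : E -> V) (A C K X : {set E}) (U : V -> Prop) :
  sepx tl hd A K X U -> sepx tl hd A C K U -> sepx tl hd A C X U.
Proof.
move=> HK HC x q Ux pq lX aA.
have [q1 [q2 [Eq Hl]]] := has_split (HK x q Ux pq lX aA).
move: pq aA; rewrite Eq cat_path => /andP [p1 _].
rewrite -cat_cons all_cat has_cat => /andP [a1 _].
by rewrite (HC x q1 Ux p1 Hl a1).
Qed.

Definition reachP (V E : finType) (tl hd : E -> V) (A K : {set E}) (U : V -> Prop) (v : V) : Prop :=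
  U v \/ exists x q, [/\ U (tl x), path (succ tl hd) x q,
                        all (fun a => (a \in A) && (a \notin K)) (x :: q) & hd (last x q) = v].

Definition reachS (V E : finType) (tl hd : E -> V) (A K : {set E}) (U : V -> Prop) : {set V} :=
  [set v | pb (reachP tl hd A K U v)].

Definition delta (V E : finType) (tl hd : E -> V) (A X : {set E}) (S : {set V}) : {set E} :=
  [set e in A | (tl e \in S) && ((e \in X) || (hd e \notin S))].

Lemma delta_sep (V E : finType) (tl hd : E -> V) (A X : {set E}) (U : V -> Prop) (S : {set V}) (Y : {set E}) :
  (forall v, U v -> v \in S) ->
  (forall y, y \in Y -> y \in A -> tl y \in S -> y \in delta tl hd A X S) ->
  sepx tl hd A (delta tl hd A X S) Y U.
Proof.
move=> US HY x q Ux; have : tl x \in S by auto.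
clear Ux; elim: q x => [|y q IH] x /= tS.
- move=> _ xY /andP[xA _]; by rewrite HY.
- move=> /andP[sxy pq] lY /andP[xA aA].
  case xd: (x \in delta tl hd A X S) => //=.
  apply: IH => //.
  move: xd; rewrite /delta inE xA tS /= => /norP [_ /negbNE].
  by rewrite -(eqP sxy).
Qed.

Lemma reachS_U (V E : finType) (tl hd : E -> V) (A K : {set E}) (U : V -> Prop) v :
  U v -> v \in reachS tl hd A K U.
Proof. by move=> Uv; rewrite inE; apply/pbP; left. Qed.

Lemma walk_reach (V E : finType) (tl hd : E -> V) (A K : {set E}) (U : V -> Prop) x q :
  U (tl x) -> path (succ tl hd) x q -> all (fun a => (a \in A) && (a \notin K)) (x :: q) ->
  hd (last x q) \in reachS tl hd A K U.
Proof. by move=> *; rewrite inE; apply/pbP; right; exists x, q. Qed.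

Lemma reach_ext (V E : finType) (tl hd : E -> V) (A K : {set E}) (U : V -> Prop) e :
  tl e \in reachS tl hd A K U -> e \in A -> e \notin K ->
  exists x q, [/\ U (tl x), path (succ tl hd) x q,
                all (fun a => (a \in A) && (a \notin K)) (x :: q) & last x q = e].
Proof.
rewrite inE => /pbP [Ue|[x [q [Ux pq aq lq]]]] eA eK.
- by exists e, [::]; rewrite /= eA eK.
- exists x, (rcons q e); split=> //.
  + by rewrite rcons_path pq /succ lq eqxx.
  + by rewrite -rcons_cons all_rcons eA eK.
  + by rewrite last_rcons.
Qed.

Lemma delta_sub_cut (V E : finType) (tl hd : E -> V) (A K X : {set E}) (U : V -> Prop) :
  sepx tl hd A K X U -> delta tl hd A X (reachS tl hd A K U) \subset K.
Proof.
move=> H; apply/subsetP => e; rewrite inE => /and3P[eA te ex].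
apply/negPn/negP => eK.
have [x [q [Ux pq aq lq]]] := reach_ext te eA eK.
case/orP: ex => [eX|].
- have aA : all (fun a => a \in A) (x :: q).
    by apply: sub_all aq => a /andP[].
  have := H x q Ux pq (etrans (congr1 _ lq) eX) aA.
  move/hasP => [a ain aK]; move/allP: aq => /(_ a ain) /andP[_]; by rewrite aK.
- by rewrite -lq (walk_reach Ux pq aq).
Qed.

Lemma reach_delta_sub (V E : finType) (tl hd : E -> V) (A X : {set E}) (U : V -> Prop) (S : {set V}) :
  (forall v, U v -> v \in S) -> reachS tl hd A (delta tl hd A X S) U \subset S.
Proof.
move=> US; apply/subsetP => v; rewrite inE => /pbP [/US //|[x [q [Ux pq aq <-]]]].
have : tl x \in S by auto.
clear Ux; elim: q x pq aq => [|y q IH] x /= pq.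
- rewrite andbT => /andP [xA xd] tS.
  move: xd; rewrite /delta inE xA tS /= => /norP [_ /negbNE] //.
- move=> /andP [/andP [xA xd] aq] tS; apply: IH => //.
  + by move: pq => /andP[].
  + move: xd; rewrite /delta inE xA tS /= => /norP [_ /negbNE].
    by move: pq => /andP [/eqP <- _].
Qed.

Lemma delta_submod (V E : finType) (tl hd : E -> V) (A X : {set E}) (S T : {set V}) :
  #|delta tl hd A X (S :&: T)| + #|delta tl hd A X (S :|: T)| <=
  #|delta tl hd A X S| + #|delta tl hd A X T|.
Proof.
rewrite -!sum1_card !(big_mkcond (fun e => e \in _)) -!big_split /=.
apply: leq_sum => e _; rewrite !inE.
by case: (e \in A); case: (tl e \in S); case: (tl e \in T); case: (e \in X);
  case: (hd e \in S); case: (hd e \in T).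
Qed.

Lemma mincut_ex (V E : finType) (tl hd : E -> V) (A X : {set E}) (U : V -> Prop) :
  exists K, mincut tl hd A X U K.
Proof.
have [n [[K [KA sK <-]] Hm]] : exists n, (exists K : {set E}, [/\ K \subset A, sep tl hd A K X U & #|K| = n])
   /\ forall m, (exists K : {set E}, [/\ K \subset A, sep tl hd A K X U & #|K| = m]) -> n <= m.
  apply: ex_min; exists #|A|, A; split=> //; apply/sepE => x q _ _ _ /=.
  by case/andP => ->.
exists K; split=> // C CA sC; apply: Hm; by exists C.
Qed.

Lemma mincut_delta (V E : finType) (tl hd : E -> V) (A X : {set E}) (U : V -> Prop) K :
  mincut tl hd A X U K -> delta tl hd A X (reachS tl hd A K U) = K.
Proof.
case=> KA /sepE sK min.
have sub := delta_sub_cut sK.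
apply/eqP; rewrite eqEcard sub /=; apply: min.
- by apply/subsetP => e; rewrite inE => /andP[].
- apply/sepE; apply: delta_sep => [v|y yX yA ty]; first exact: reachS_U.
  by rewrite inE yA ty yX.
Qed.

Lemma primary_ex (V E : finType) (tl hd : E -> V) (A X : {set E}) (U : V -> Prop) :
  exists K, primary tl hd A X U K.
Proof.
have [K0 m0] := mincut_ex tl hd A X U.
suff : forall (n : nat) (K : {set E}), #|reachS tl hd A K U| = n -> mincut tl hd A X U K ->
          exists P, primary tl hd A X U P by move/(_ _ K0 erefl m0).
elim/ltn_ind => n IH K eqn mK.
case: (classic (forall K', mincut tl hd A X U K' -> sep tl hd A K K' U)) => [H|].
  by exists K; split.
move=> /not_all_ex_not [K' HK']; have [mK' nsep] := imply_to_and _ _ HK'.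
set S := reachS tl hd A K U; set S' := reachS tl hd A K' U.
have eK := mincut_delta mK; have eK' := mincut_delta mK'.
have US : forall v, U v -> v \in S by move=> v; apply: reachS_U.
have US' : forall v, U v -> v \in S' by move=> v; apply: reachS_U.
have dA : forall Z, delta tl hd A X Z \subset A.
  by move=> Z; apply/subsetP => e; rewrite inE => /andP[].
have dsep : forall Z : {set V}, (forall v, U v -> v \in Z) -> sep tl hd A (delta tl hd A X Z) X U.
  move=> Z UZ; apply/sepE; apply: delta_sep => // y yX yA ty; by rewrite inE yA ty yX.
case: (mK) => KA sK minK; case: (mK') => KA' sK' minK'.
have UI : forall v, U v -> v \in S :&: S' by move=> v Uv; rewrite inE US ?US'.
have UU : forall v, U v -> v \in S :|: S' by move=> v Uv; rewrite inE US.
have le3 := minK _ (dA (S :&: S')) (dsep _ UI).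
have le4 := minK _ (dA (S :|: S')) (dsep _ UU).
have eqc : #|K| = #|K'|.
  by apply/eqP; rewrite eqn_leq (minK _ KA' sK') (minK' _ KA sK).
have sub := delta_submod tl hd A X S S'.
rewrite -/S -/S' in eK eK'.
have m3 : mincut tl hd A X U (delta tl hd A X (S :&: S')).
  split; [exact: dA | exact: (dsep _ UI)|].
  move=> C CA sC; apply: leq_trans (minK _ CA sC).
  move: sub; rewrite eK eK' -eqc => sub.
  by rewrite -(leq_add2r #|delta tl hd A X (S :|: S')|); apply: leq_trans sub _; rewrite leq_add2l.
apply: (IH _ _ _ erefl m3); rewrite -eqn.
have nSS : ~~ (S \subset S').
  apply/negP => SS; apply: nsep; rewrite -eK; apply/sepE; apply: delta_sep => // y.
  rewrite -eK' !inE => /and3P [yA ty yX] _ tS; rewrite yA tS /=.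
  case/orP: yX => [->//|hy]; apply/orP; right; apply/negP => hS; move/negP: hy; apply.
  by have := subsetP SS (hd y); rewrite !inE; apply.
apply: (leq_ltn_trans (subset_leq_card (reach_delta_sub tl hd A X UI))).
apply: proper_card; rewrite properEneq subsetIl andbT.
apply/negP => /eqP /setIidPl; by apply/negP.
Qed.


Definition anc (V E : finType) (tl hd : E -> V) (e : E) : {set E} :=
  [set f | [exists g, succ tl hd f g && connect (succ tl hd) g e]].
Definition ht (V E : finType) (tl hd : E -> V) (e : E) : nat := #|anc tl hd e|.

Lemma anc_not (V E : finType) (tl hd : E -> V) e :
  acyclic tl hd -> e \notin anc tl hd e.
Proof.
move=> ac; rewrite inE; apply/negP => /existsP [g /andP [sg /connectP [p pp lp]]].
have := ac (tl g) (g :: p) isT; rewrite walk_rc eqxx pp -lp.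
by move: sg; rewrite /succ => ->.
Qed.

Lemma ht_in (V E : finType) (tl hd : E -> V) e e' :
  acyclic tl hd -> hd e' = tl e -> ht tl hd e' < ht tl hd e.
Proof.
move=> ac he; apply: proper_card; apply/properP; split.
- apply/subsetP => f; rewrite !inE => /existsP [g /andP [sg cg]].
  apply/existsP; exists g; rewrite sg /=; apply: connect_trans cg _.
  by apply: connect1; rewrite /succ he.
- exists e'; last exact: anc_not.
  by rewrite inE; apply/existsP; exists e; rewrite /succ he eqxx connect0.
Qed.

Lemma ht_lt (V E : finType) (tl hd : E -> V) e :
  acyclic tl hd -> ht tl hd e < #|E|.
Proof.
move=> ac; rewrite -cardsT; apply: proper_card; apply/properP; split; first exact: subsetT.
by exists e; [rewrite inE | exact: anc_not].
Qed.

Lemma reaches_ext (V E : finType) (tl hd : E -> V) s e e' :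
  reaches tl hd s e' -> hd e' = tl e -> reaches tl hd s e.
Proof.
move=> /reachesE [x [q [tx pq lq]]] he; apply/reachesE; exists x, (rcons q e); split=> //.
- by rewrite rcons_path pq /succ lq he eqxx.
- by rewrite last_rcons.
Qed.

Lemma src_reach (V E : finType) (tl hd : E -> V) e :
  acyclic tl hd -> exists s, s \in srcs hd /\ reaches tl hd s e.
Proof.
move=> ac; move: {2}(ht tl hd e) (erefl (ht tl hd e)) => n; elim/ltn_ind: n e => n IH e eqn.
case sr: (tl e \in srcs hd).
- exists (tl e); split=> //; apply/reachesE; by exists e, [::].
- move: sr; rewrite inE => /negbT /set0Pn [e']; rewrite inE => /eqP he.
  have lt : ht tl hd e' < n by rewrite -eqn; exact: ht_in ac he.
  have [s [ss rs]] := IH _ lt e' erefl.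
  exists s; split=> //; exact: reaches_ext rs he.
Qed.


Lemma sep_eqU (V E : finType) (tl hd : E -> V) (A C X : {set E}) (U U' : V -> Prop) :
  (forall u, U u <-> U' u) -> sep tl hd A C X U -> sep tl hd A C X U'.
Proof. move=> H S u p e /H Uu; exact: S. Qed.

Lemma sep_self (V E : finType) (tl hd : E -> V) (A X : {set E}) (U : V -> Prop) :
  sep tl hd A X X U.
Proof. apply/sepE => x q _ _ lX _; apply/hasP; exists (last x q) => //; exact: mem_last. Qed.

Lemma has_all_neg (T : eqType) (P : pred T) s : has P s -> all (predC P) s -> False.
Proof. by move=> h; rewrite all_predC h. Qed.

Lemma D_nonempty (V E : finType) (tl hd : E -> V) (W : {set E}) :
  W != set0 -> mincut tl hd setT W (Dset tl hd W) W -> exists s, Dset tl hd W s.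
Proof.
move=> Wn [_ _ min]; apply: NNPP => nD.
have : #|W| <= #|@set0 E|.
  apply: min; first exact: sub0set.
  apply/sepE => x q Dx; exfalso; apply: nD; by exists (tl x).
by rewrite cards0 leqn0 cards_eq0 (negbTE Wn).
Qed.

Lemma D_nonempty2 (V E : finType) (tl hd : E -> V) (W : {set E}) :
  acyclic tl hd -> W != set0 -> exists s, Dset tl hd W s.
Proof.
move=> ac /set0Pn [w wW]; have [s [ss rs]] := src_reach w ac.
by exists s; split=> //; exists w.
Qed.

Lemma src_rho (V E : finType) (tl hd : E -> V) (rho s : V) :
  network tl hd rho -> s \in srcs hd -> s != rho.
Proof. by case=> _ nr _ _ ss; apply/eqP => esr; move: nr; rewrite -esr ss. Qed.

Lemma Iset_of_sep (V E : finType) (tl hd : E -> V) (rho : V) (W C : {set E}) :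
  network tl hd rho -> sep tl hd (~: W) C (Ein hd rho) (Dset tl hd W) ->
  forall s, Dset tl hd W s -> Iset tl hd rho (C :|: W) s.
Proof.
move=> N /sepE S s Ds; split; first by case: Ds.
case=> [[|x q]]; first by rewrite /= (negbTE (src_rho N (proj1 Ds))) => -[].
rewrite walk_rc => -[/and3P [/eqP tx pq hr] al].
have al' : all (fun a => a \in ~: W) (x :: q).
  by apply: sub_all al => a; rewrite !inE negb_or => /andP[].
have Dx : Dset tl hd W (tl x) by rewrite tx.
have := S x q Dx pq ltac:(by rewrite inE) al'.
move/hasP => [a ain aC]; move/allP: al => /(_ a ain); by rewrite inE aC.
Qed.

Lemma pair_of_cut (V E : finType) (tl hd : E -> V) (rho : V) (r : nat) (W C : {set E}) :
  network tl hd rho -> #|W| <= r -> W != set0 -> (exists s, Dset tl hd W s) ->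
  C \subset ~: W -> sep tl hd (~: W) C (Ein hd rho) (Dset tl hd W) ->
  WCpair tl hd rho r W (C :|: W) /\ #|C :|: W| - #|W| = #|C|.
Proof.
move=> N Wr Wn [s Ds] CW S; have I := Iset_of_sep N S.
split.
  split=> //; [by exists s; apply: I | exact: subsetUr].
rewrite -cardsDS ?subsetUr //; suff -> : (C :|: W) :\: W = C by [].
apply/setP => e; rewrite !inE.
case eW: (e \in W) => /=; last by rewrite orbF.
apply/esym/negbTE/negP => eC; move/subsetP: CW => /(_ e eC); by rewrite inE eW.
Qed.

Lemma D_eq (V E : finType) (tl hd : E -> V) (W0 W' : {set E}) :
  mincut tl hd setT W0 (Dset tl hd W0) W' ->
  forall s, Dset tl hd W0 s <-> Dset tl hd W' s.
Proof.
move=> [_ /sepE S min] s; split.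
- case=> ss [w wW /reachesE [x [q [tx pq lq]]]].
  have Dx : Dset tl hd W0 (tl x) by rewrite tx; split=> //; exists w => //; apply/reachesE; exists x, q.
  have aT : all (fun a => a \in [set: E]) (x :: q) by apply/allP => a _; exact: in_setT.
  have lX : last x q \in W0 by rewrite lq.
  have [q1 [q2 [Eq H1]]] := has_split (S x q Dx pq lX aT).
  split=> //; exists (last x q1) => //; apply/reachesE; exists x, q1; split=> //.
  by move: pq; rewrite Eq cat_path => /andP[].
- case=> ss [e eW' rse]; apply: NNPP => nD.
  have : #|W'| <= #|W' :\ e|.
    apply: min; first exact: subsetT.
    apply/sepE => x q Dx pq lX aA.
    have [q1 [q2 [Eq H1]]] := has_split (S x q Dx pq lX aA).
    case le: (last x q1 == e).
    + exfalso; apply: nD; split=> //; exists (last x q) => //.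
      move/reachesE: rse => [x' [q' [tx' pq' lq']]]; apply/reachesE.
      exists x', (q' ++ q2); split=> //.
      * rewrite cat_path pq' lq' -(eqP le).
        by move: pq; rewrite Eq cat_path => /andP[].
      * by rewrite Eq !last_cat lq' (eqP le).
    + apply/hasP; exists (last x q1); last by rewrite !inE le.
      by rewrite Eq -cat_cons mem_cat mem_last.
  by rewrite (cardsD1 e W') eW' add1n ltnn.
Qed.

Lemma hat_idem (V E : finType) (tl hd : E -> V) (W0 W' : {set E}) :
  primary tl hd setT W0 (Dset tl hd W0) W' -> is_hat tl hd W'.
Proof.
move=> [mW' pW']; have DE := D_eq mW'.
have DE' : forall s, Dset tl hd W' s <-> Dset tl hd W0 s by move=> s; split=> /DE.
case: (mW') => _ sW' minW'.
have trans : forall C, sep tl hd setT C W' (Dset tl hd W') -> sep tl hd setT C W0 (Dset tl hd W0).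
  move=> C sC; apply/sepE; apply: (sep_trans (K := W')); apply/sepE => //.
  exact: sep_eqU DE' sC.
have mW'' : mincut tl hd setT W' (Dset tl hd W') W'.
  split; [exact: subsetT | exact: sep_self |].
  by move=> C CA sC; apply: minW' CA (trans _ sC).
split=> // C [CA sC minC].
apply: sep_eqU DE _; apply: pW'; split=> //; first exact: trans _ sC.
move=> C3 C3A sC3.
apply: (leq_trans _ (minW' _ C3A sC3)).
by case: mW'' => _ sW _; apply: minC.
Qed.


Lemma part2 (V E : finType) (tl hd : E -> V) (rho : V) (r : nat) :
  network tl hd rho -> (0 < r)%N ->
  (exists v : nat,
     [/\ (exists W C, [/\ Wr' tl hd r W, Cstar tl hd rho W C & #|C| = v]),
         (forall W C, Wr' tl hd r W -> Cstar tl hd rho W C -> (v <= #|C|)%N),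
         (exists W C, WCpair tl hd rho r W C /\ (#|C| - #|W|)%N = v)
       & (forall W C, WCpair tl hd rho r W C -> (v <= #|C| - #|W|)%N)]).
Proof.
move=> N r0; have ac : acyclic tl hd by case: N.
have [e he] : exists e, hd e = rho.
  case: N => _ nr _ _; move: nr; rewrite inE => /set0Pn [e]; rewrite inE => /eqP; by exists e.
have allI : forall s, s \in srcs hd -> Iset tl hd rho [set: E] s.
  move=> s ss; split=> //; case=> [[|x q]] [].
  - by rewrite /= (negbTE (src_rho N ss)).
  - by move=> _ /= /andP[]; rewrite inE.
have [v [[W0 [C0 [P0 eqv]]] minv]] : exists v, (exists W C, WCpair tl hd rho r W C /\ #|C| - #|W| = v)
   /\ forall m, (exists W C, WCpair tl hd rho r W C /\ #|C| - #|W| = m) -> v <= m.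
  apply: ex_min; exists (#|[set: E]| - #|[set e]|), [set e], [set: E]; split=> //; split.
  - by rewrite cards1.
  - by apply/set0Pn; exists e; rewrite inE.
  - have [s [ss _]] := src_reach e ac; exists s; exact: allI.
  - exact: subsetT.
  - by move=> s [ss _]; apply: allI.
have pairv : forall W C, Wr' tl hd r W -> Cstar tl hd rho W C -> v <= #|C|.
  move=> W C [Wr Wn hW] [[CA sC _] _].
  have DW := D_nonempty Wn (proj1 hW).
  have [P1 P2] := pair_of_cut N Wr Wn DW CA sC.
  rewrite -P2; apply: minv; by exists W, (C :|: W).
exists v; split => //; last first.
- by move=> W C PWC; apply: minv; exists W, C.
- by exists W0, C0.
case: P0 => W0r W0n _ W0C DI.
have [W' pW'] := primary_ex tl hd setT W0 (Dset tl hd W0).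
have [C' pC'] := primary_ex tl hd (~: W') (Ein hd rho) (Dset tl hd W').
have hW' := hat_idem pW'.
case: (pW') => mW' _; have DE := D_eq mW'.
case: (mW') => _ /sepE sW' minW'.
have W'r : #|W'| <= r by apply: leq_trans W0r; apply: minW'; [exact: subsetT | exact: sep_self].
have W'n : W' != set0.
  have [s [ss [w wW /reachesE [x [q [tx pq lq]]]]]] := D_nonempty2 ac W0n.
  have Dx : Dset tl hd W0 (tl x) by rewrite tx; split=> //; exists w => //; apply/reachesE; exists x, q.
  have aT : all (fun a => a \in [set: E]) (x :: q) by apply/allP => a _; exact: in_setT.
  have lX : last x q \in W0 by rewrite lq.
  have /hasP [a _ aW] := sW' x q Dx pq lX aT.
  by apply/set0Pn; exists a.
have WrW' : Wr' tl hd r W' by split.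
exists W', C'; split=> //; apply/eqP; rewrite eqn_leq (pairv W' C' WrW' pC') andbT -eqv.
case: (pC') => -[C'A sC' minC'] _.
rewrite -cardsDS //.
have KA : (C0 :\: W0) :&: ~: W' \subset ~: W' by apply: subsetIr.
suff sK : sep tl hd (~: W') ((C0 :\: W0) :&: ~: W') (Ein hd rho) (Dset tl hd W').
  exact: leq_trans (minC' _ KA sK) (subset_leq_card (subsetIl _ _)).
apply/sepE => x q Dx pq lX aA.
have Dx0 : Dset tl hd W0 (tl x) by apply/DE.
have nW0 : all (predC (fun a => a \in W0)) (x :: q).
  rewrite all_predC; apply/negP => hW0.
  have [q1 [q2 [Eq H1]]] := has_split hW0.
  have aT : all (fun a => a \in [set: E]) (x :: q1) by apply/allP => a _; exact: in_setT.
  have p1 : path (succ tl hd) x q1 by move: pq; rewrite Eq cat_path => /andP[].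
  have /hasP [a ain aW] := sW' x q1 Dx0 p1 H1 aT.
  have ain' : a \in x :: q by rewrite Eq -cat_cons mem_cat ain.
  by move/allP: aA => /(_ a ain'); rewrite inE aW.
have hC0 : has (fun a => a \in C0) (x :: q).
  apply/negPn/negP => nh; case: (DI _ Dx0) => _; apply.
  exists (x :: q); split; last by rewrite all_predC.
  by rewrite walk_rc eqxx pq; move: lX; rewrite inE.
case/hasP: hC0 => a ain aC; apply/hasP; exists a => //.
move/allP: nW0 => /(_ a ain) /= aW0; move/allP: aA => /(_ a ain).
by rewrite !inE aC aW0 => ->.
Qed.


Lemma iter_stab (F : finFieldType) (V E : finType) (tl hd : E -> V) (rho : V) (l n : nat)
  (c : code F tl hd rho l n) (w : Omega c) :
  acyclic tl hd -> forall m e, ht tl hd e < m -> forall k, m <= k ->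
  iter k (step w) (fun _ => 0%R) e = iter m (step w) (fun _ => 0%R) e.
Proof.
move=> ac; elim=> [|m IH] e // hlt [|k] // lk.
rewrite !iterS /step; case: insubP => [s _ _|_] //.
apply: loc_local => e' /eqP he'; apply: IH => //.
by apply: leq_trans (ht_in ac he') _.
Qed.

Lemma glob_fix (F : finFieldType) (V E : finType) (tl hd : E -> V) (rho : V) (l n : nat)
  (c : code F tl hd rho l n) (w : Omega c) e :
  acyclic tl hd -> glob w e = step w (glob w) e.
Proof.
move=> ac; rewrite /glob -iterS (iter_stab w ac (ht_lt e ac)) //.
Qed.

Lemma glob_dep (F : finFieldType) (V E : finType) (tl hd : E -> V) (rho : V) (l n : nat)
  (c : code F tl hd rho l n) (w w' : Omega c) e :
  (forall s : srcT hd, reaches tl hd (val s) e -> w.1 s = w'.1 s /\ w.2 s = w'.2 s) ->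
  glob w e = glob w' e.
Proof.
rewrite /glob; elim: #|E| e => [|k IH] e H //.
rewrite !iterS /step; case: insubP => [s _ vs|_].
- have [-> ->] := H s ltac:(by rewrite vs; apply/reachesE; exists e, [::]).
  done.
- apply: loc_local => e' /eqP he'; apply: IH => s rs; apply: H.
  exact: reaches_ext rs he'.
Qed.

Definition Dfree (V E : finType) (tl hd : E -> V) (U : V -> Prop) (G : {set E}) (e : E) : Prop :=
  forall x q, U (tl x) -> path (succ tl hd) x q -> last x q = e -> has (fun a => a \in G) (x :: q).

Lemma glob_DF (F : finFieldType) (V E : finType) (tl hd : E -> V) (rho : V) (l n : nat)
  (c : code F tl hd rho l n) (w w' : Omega c) (U : V -> Prop) (G : {set E}) :
  acyclic tl hd ->
  (forall s : srcT hd, ~ U (val s) -> w.1 s = w'.1 s /\ w.2 s = w'.2 s) ->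
  (forall e, e \in G -> glob w e = glob w' e) ->
  forall e, Dfree tl hd U G e -> glob w e = glob w' e.
Proof.
move=> ac Hs HG e; move: {2}(ht tl hd e) (erefl (ht tl hd e)) => m.
elim/ltn_ind: m e => m IH e eqm DF.
case eG: (e \in G); first exact: HG.
rewrite (glob_fix w e ac) (glob_fix w' e ac) /step; case: insubP => [s _ vs|_].
- have nU : ~ U (val s).
    move=> Us; have := DF e [::] ltac:(by rewrite -vs) isT erefl; by rewrite /= eG.
  by have [-> ->] := Hs s nU.
- apply: loc_local => e' /eqP he'.
  have lt : ht tl hd e' < m by rewrite -eqm; exact: ht_in ac he'.
  apply: (IH _ lt e' erefl) => x q Ux pq lq.
  have := DF x (rcons q e) Ux ltac:(by rewrite rcons_path pq /succ lq he' eqxx) ltac:(by rewrite last_rcons).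
  by rewrite -rcons_cons has_rcons eG.
Qed.
Local Open Scope ring_scope.


Lemma card_sumR (R : realType) (T : finType) (P : pred T) :
  (#|[set u | P u]|%:R : R) = \sum_u (P u)%:R.
Proof.
rewrite -sum1_card natr_sum big_mkcond /=; apply: eq_bigr => u _; rewrite inE.
by case: (P u).
Qed.

Lemma ln_ge (R : realType) (a : R) : 0 < a -> 1 - a^-1 <= ln a.
Proof.
move=> a0; have := @le_ln1Dx R (a^-1 - 1).
have -> : 1 + (a^-1 - 1) = a^-1 by rewrite addrCA subrr addr0.
rewrite lnV ?posrE // => H.
have : - ln a <= a^-1 - 1 by apply: H; rewrite ltrBrDr addNr invr_gt0.
by move=> h; lra.
Qed.

Lemma f_bound (R : realType) (T : finType) (A B : eqType) (X : T -> A) (Y : T -> B) (u v : T) :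
  \sum_t (((X u == X t) && (Y v == Y t))%:R /
      (#|[set t' | (X t' == X t) && (Y t' == Y t)]|%:R : R)) <= 1.
Proof.
set K := [set t | (X u == X t) && (Y v == Y t)].
rewrite (eq_bigr (fun t => (t \in K)%:R / #|K|%:R)); last first.
  move=> t _; rewrite inE; case tK: ((X u == X t) && (Y v == Y t)); last by rewrite !mul0r.
  case/andP: tK => /eqP Xe /eqP Ye.
  suff -> : [set t' | (X t' == X t) && (Y t' == Y t)] = K by [].
  by apply/setP => t'; rewrite !inE Xe Ye (eq_sym (X t)) (eq_sym (Y t)).
rewrite -mulr_suml.
have -> : \sum_t ((t \in K)%:R : R) = #|K|%:R.
  by rewrite /K card_sumR; apply: eq_bigr => t _; rewrite inE.
case: (posnP #|K|) => [->|Kp]; first by rewrite mul0r ler01.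
by rewrite divff // pnatr_eq0 -lt0n.
Qed.

Lemma mutinf_supp (R : realType) (T : finType) (A B : eqType) (X : T -> A) (Y : T -> B) :
  mutinf R X Y = 0 -> forall t1 t2, exists u, X u = X t1 /\ Y u = Y t2.
Proof.
move=> H0 t1 t2; apply: NNPP => nex.
set cJ := fun t => #|[set u | (X u == X t) && (Y u == Y t)]|.
set cX := fun t => #|[set u | X u == X t]|.
set cY := fun t => #|[set u | Y u == Y t]|.
set N := #|T|.
have N0 : (0 < N)%N by apply/card_gt0P; exists t1.
have cJ0 : forall t, (0 < cJ t)%N by move=> t; apply/card_gt0P; exists t; rewrite inE !eqxx.
have cX0 : forall t, (0 < cX t)%N by move=> t; apply/card_gt0P; exists t; rewrite inE !eqxx.
have cY0 : forall t, (0 < cY t)%N by move=> t; apply/card_gt0P; exists t; rewrite inE !eqxx.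
set n : R := N%:R.
have n0 : 0 < n by rewrite ltr0n.
have S_le : \sum_t ((cX t)%:R * (cY t)%:R / (cJ t)%:R) <= n ^+ 2 - 1.
  have -> : \sum_t ((cX t)%:R * (cY t)%:R / (cJ t)%:R : R) =
     \sum_u \sum_v \sum_t (((X u == X t) && (Y v == Y t))%:R / (cJ t)%:R).
    symmetry; under eq_bigr do rewrite exchange_big /=.
    rewrite exchange_big /=; apply: eq_bigr => t _.
    rewrite /cX /cY !card_sumR mulr_suml mulr_suml; apply: eq_bigr => u _.
    rewrite mulr_sumr mulr_suml; apply: eq_bigr => v _.
    by case: (X u == X t); case: (Y v == Y t); rewrite ?mul1r ?mul0r.
  have fle : forall u v, \sum_t (((X u == X t) && (Y v == Y t))%:R / ((cJ t)%:R : R))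
                <= 1 - ((u == t1) && (v == t2))%:R.
    move=> u v; case: (eqVneq u t1) => [->|_]; case: (eqVneq v t2) => [->|_] /=;
      rewrite ?subr0 ?f_bound //.
    rewrite subrr big1 // => t _.
    case h: ((X t1 == X t) && (Y t2 == Y t)); last by rewrite mul0r.
    exfalso; apply: nex; exists t; by case/andP: h => /eqP -> /eqP ->.
  apply: le_trans (ler_sum _ (fun u _ => ler_sum _ (fun v _ => fle u v))) _.
  rewrite le_eqVlt; apply/orP; left; apply/eqP.
  under eq_bigr do rewrite sumrB.
  rewrite sumrB.
  have s1 : \sum_(i : T) (1 : R) = n by rewrite sumr_const.
  rewrite !s1 sumr_const -mulr_natr /n /N -expr2.
  congr (_ - _).
  rewrite (bigD1 t1) //= (bigD1 t2) //= !eqxx big1 ?addr0; last first.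
    by move=> v /negbTE ->; rewrite andbF.
  rewrite big1 ?addr0 // => u /negbTE ->; rewrite big1 // => v _.
set Z := fun t => ((cX t)%:R * (cY t)%:R / (cJ t)%:R : R).
have nz : forall k, (0 < k)%N -> (k%:R : R) != 0 by move=> k k0; rewrite pnatr_eq0 -lt0n.
have term : forall t, n^-1 * (1 - Z t / n) <= (#|T|%:R)^-1 * ln (prob R (fun u => (X u == X t) && (Y u == Y t)) / (prob R (fun u => X u == X t) * prob R (fun u => Y u == Y t))).
  move=> t; rewrite /prob -/N -/n.
  apply: ler_wpM2l; first by rewrite invr_ge0 ltW.
  have hJ := nz _ (cJ0 t); have hX := nz _ (cX0 t); have hY := nz _ (cY0 t); have hn : n != 0 by rewrite lt0r_neq0.
  have a0 : 0 < (cJ t)%:R / n / ((cX t)%:R / n * ((cY t)%:R / n)).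
    by rewrite !(divr_gt0, mulr_gt0) // ltr0n.
  have := ln_ge a0; congr (_ <= _); congr (_ - _).
  rewrite /Z; field.
  by rewrite hJ hX hY hn.
have lb : \sum_t n^-1 * (1 - Z t / n) <= mutinf R X Y.
  by apply: ler_sum => t _; apply: term.
have hn : n != 0 by rewrite lt0r_neq0.
have ev : \sum_t n^-1 * (1 - Z t / n) = 1 - n^-1 * n^-1 * \sum_t Z t.
  rewrite (eq_bigr (fun t => n^-1 - n^-1 * n^-1 * Z t)); last by move=> t _; field.
  by rewrite sumrB sumr_const -mulr_sumr -mulr_natr -/N -/n mulVf.
rewrite ev H0 in lb.
have := ler_wpM2l (x := n^-1 * n^-1) ltac:(by rewrite mulr_ge0 // invr_ge0 ltW) S_le.
have -> : n^-1 * n^-1 * (n ^+ 2 - 1) = 1 - n^-1 * n^-1 by field.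
have : 0 < n^-1 * n^-1 by rewrite mulr_gt0 // invr_gt0.
move: lb; set y := n^-1 * n^-1 * \sum_t Z t; set z := n^-1 * n^-1.
lra.
Qed.
Local Close Scope ring_scope.


Lemma rate_bound (R : realType) (F : finFieldType) (V E : finType) (tl hd : E -> V) (rho : V)
  (r : nat) (W C : {set E}) (l n : nat) (c : code F tl hd rho l n) :
  network tl hd rho -> Wr' tl hd r W -> Cstar tl hd rho W C -> admissible R r c ->
  l <= n * #|C|.
Proof.
move=> Nw [Wr Wn hW] [[CA /sepE sC _] _] [dec_ok sec].
have ac : acyclic tl hd by case: Nw.
have [s0v Ds0] := D_nonempty Wn (proj1 hW).
pose s0 : srcT hd := exist _ s0v (proj1 Ds0).
have exk : forall s, exists k : key c s, true.
  by move=> s; have /card_gt0P [k _] := key_nonempty c s; exists k.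
pose k0 : keyT c := finfun (fun s => xchoose (exk s)).
pose w0 : Omega c := ([ffun _ => 0%R], k0).
pose ma (a : 'rV[F]_l) : msgT F hd l := [ffun s => if s == s0 then a else 0%R].
have sec0 := mutinf_supp (sec W Wr).
have exu : forall a, exists u : Omega c, (YW W u == YW W w0) && (u.1 == ma a).
  move=> a; have [u [h1 h2]] := sec0 w0 (ma a, k0); exists u; by rewrite h1 h2 !eqxx.
pose ua a := xchoose (exu a).
pose wa a : Omega c := (ma a, finfun (fun s => if pb (Dset tl hd W (val s)) then (ua a).2 s else k0 s)).
have YWa : forall a e, e \in W -> glob (wa a) e = glob w0 e.
  move=> a e eW.
  have /andP [/eqP Y1 /eqP Y2] := xchooseP (exu a).
  rewrite (glob_dep (w := wa a) (w' := ua a)).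
    by have := congr1 (fun f : {ffun E -> 'rV[F]_n} => f e) Y1; rewrite /YW !ffunE eW.
  move=> s rs; rewrite /wa /= -/(ua a) Y2; split=> //.
  rewrite ffunE; case: (pbP (Dset tl hd W (val s))) => // nD.
  exfalso; apply: nD; split; first exact: (valP s).
  by exists e.
have suma : forall a, (\sum_(s : srcT hd) (wa a).1 s)%R = a.
  move=> a; rewrite /= (bigD1 s0) //= ffunE eqxx big1 ?GRing.addr0 // => s /negbTE.
  by rewrite ffunE => ->.
pose f a := [ffun ec : {e : E | e \in C} => glob (wa a) (val ec)].
have finj : injective f.
  move=> a b fab; rewrite -(suma a) -(suma b) -!dec_ok; apply: dec_local => e' /eqP he'.
  apply: (glob_DF (w := wa a) (w' := wa b) (U := Dset tl hd W) (G := C :|: W) ac).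
  - move=> s nD; rewrite /wa /= !ffunE; case: (pbP (Dset tl hd W (val s))) => // _.
    have -> : (s == s0) = false.
      apply/negbTE/eqP => es; apply: nD; by rewrite es.
    done.
  - move=> e; rewrite inE => /orP [eC|eW]; last by rewrite !YWa.
    have := congr1 (fun g : {ffun {e : E | e \in C} -> 'rV[F]_n} => g (exist _ e eC)) fab; by rewrite !ffunE.
  - move=> x q Dx pq lq.
    case hw: (has (fun a' => a' \in W) (x :: q)).
      by apply: sub_has hw => a' aW; rewrite inE aW orbT.
    have al : all (fun a' => a' \in ~: W) (x :: q).
      by apply/allP => a' ain; rewrite inE; apply/negP => aW; move/negbT: hw => /hasPn /(_ a' ain); rewrite aW.
    have := sC x q Dx pq ltac:(by rewrite lq inE he') al.
    by apply: sub_has => a' aC; rewrite inE aC.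
have := leq_card f finj.
rewrite card_ffun card_sig !card_mx !mul1n -expnM leq_exp2l ?card_finNzRing_gt1 //.
Qed.

Local Open Scope ring_scope.

Theorem theorem9 (R : realType) (F : finFieldType) (V E : finType)
  (tl hd : E -> V) (rho : V) (r : nat) :
  network tl hd rho -> (0 < r)%N ->
  (* capacity <= |C*_W| for every W in W'_r *)
  (forall (W C : {set E}), Wr' tl hd r W -> Cstar tl hd rho W C ->
     forall x : R, achievable F tl hd rho r x -> x <= #|C|%:R) /\
  (* min_{W in W'_r} |C*_W| = min { |C| - |W| : (W,C) ... } *)
  (exists v : nat,
     [/\ (exists W C, [/\ Wr' tl hd r W, Cstar tl hd rho W C & #|C| = v]),
         (forall W C, Wr' tl hd r W -> Cstar tl hd rho W C -> (v <= #|C|)%N),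
         (exists W C, WCpair tl hd rho r W C /\ (#|C| - #|W|)%N = v)
       & (forall W C, WCpair tl hd rho r W C -> (v <= #|C| - #|W|)%N)]).
Proof.
move=> Nw r0; split; last exact: part2.
move=> W C hW hC x ach; rewrite leNgt; apply/negP => lt.
have eps0 : 0 < x - #|C|%:R by rewrite subr_gt0.
have [l [n [c [n0 adm hx]]]] := ach _ eps0.
have lb := rate_bound Nw hW hC adm.
have : (l%:R / n%:R : R) <= #|C|%:R.
  by rewrite ler_pdivrMr ?ltr0n // -natrM ler_nat mulnC.
move: hx; rewrite opprB addrCA subrr addr0 => hx.
by rewrite leNgt hx.
Qed.
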